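(* For every even $m\ge4$ and every $i\in[1..f_m]$, the Fibonacci word satisfies $\mathsf{F}_m[i]=\mathtt{a}$ if $(1+i\cdot f_{m-2})\bmod f_m\le f_{m-1}$, and $\mathsf{F}_m[i]=\mathtt{b}$ otherwise.
   Context: Fibonacci words: $\mathsf{F}_1=\mathtt{b}$, $\mathsf{F}_2=\mathtt{a}$, $\mathsf{F}_m=\mathsf{F}_{m-1}\mathsf{F}_{m-2}$ (concatenation) for $m\ge3$; $f_m=|\mathsf{F}_m|$. Strings are indexed from 1. For integers $x$ and $n\ge1$, $x\bmod n$ denotes the representative of $x$ modulo $n$ in $[1..n]$ (so a multiple of $n$ maps to $n$). *)

(* Defs.v *)
From HB Require Import structures.
From mathcomp Require Import all_boot.
Set Implicit Arguments. Unset Strict Implicit. Unset Printing Implicit Defensive.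

Inductive letter := La | Lb.
Definition letter_eqb (x y : letter) : bool :=
  match x, y with La, La | Lb, Lb => true | _, _ => false end.
Lemma letter_eqP : Equality.axiom letter_eqb.
Proof. by case; case; constructor. Qed.
HB.instance Definition _ := hasDecEq.Build letter letter_eqP.

(* Fibonacci words: fibw 1 = b, fibw 2 = a, fibw m = fibw (m-1) ++ fibw (m-2).
   fibw 0 is an unused dummy (empty word). *)
Fixpoint fibw (m : nat) : seq letter :=
  match m with
  | 0 => [::]
  | 1 => [:: Lb]
  | 2 => [:: La]
  | (k.+1 as m1).+1 => fibw m1 ++ fibw k
  end.

Definition fibl (m : nat) : nat := size (fibw m).

(* 1-indexed access: w[i] for 1 <= i <= |w| *)
Definition at1 (w : seq letter) (i : nat) : letter := nth La w i.-1.

(* x mod n with representative in [1..n] (for natural x, n >= 1). *)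
Definition mod1 (x n : nat) : nat := ((x + n - 1) %% n).+1.

(* Main.v *)
Require Import Defs.
From mathcomp Require Import all_boot zify.

Lemma fibwS m : fibw m.+3 = fibw m.+2 ++ fibw m.+1. Proof. by []. Qed.
Lemma fibl_rec m : fibl m.+2 = fibl m.+1 + fibl m.
Proof. case: m => [|m] //. by rewrite /fibl fibwS size_cat. Qed.
Lemma fibl_pos m : 0 < m -> 0 < fibl m.
Proof.
elim: m => [//|m IH] _. case: m IH => [//|m] IH.
rewrite fibl_rec. have := IH isT. lia.
Qed.
Lemma cassini m : if odd m then fibl m.+1 * fibl m.+1 + 1 = fibl m * fibl m.+2
  else fibl m.+1 * fibl m.+1 = fibl m * fibl m.+2 + 1.
Proof.
elim: m => [//|m IH] /=. rewrite !fibl_rec in IH *.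
move: IH; case: (odd m) => /= IH; nia.
Qed.
Lemma at1_catl s1 s2 i : 0 < i -> i <= size s1 -> at1 (s1 ++ s2) i = at1 s1 i.
Proof. move=> h1 h2; rewrite /at1 nth_cat; have ->: i.-1 < size s1 by lia. by []. Qed.
Lemma at1_catr s1 s2 j : 0 < j -> at1 (s1 ++ s2) (size s1 + j) = at1 s2 j.
Proof. move=> h; rewrite /at1 nth_cat; have ->: (size s1 + j).-1 < size s1 = false by lia.
 by have ->: (size s1 + j).-1 - size s1 = j.-1 by lia. Qed.

Lemma last2 m : 3 <= m ->
  at1 (fibw m) (fibl m) = (if odd m then Lb else La) /\
  at1 (fibw m) (fibl m).-1 = (if odd m then La else Lb).
Proof.
elim/ltn_ind: m => m IH hm.
case: m IH hm => [|[|[|[|[|m]]]]] IH hm //.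
have [h1 h2] := IH m.+3 ltac:(lia) isT.
have p2 : 2 <= fibl m.+3 by rewrite fibl_rec; have := fibl_pos m.+2 isT; have := fibl_pos m.+1 isT; lia.
have E : fibw m.+3.+2 = fibw m.+4 ++ fibw m.+3 := fibwS _.
have L : fibl m.+3.+2 = size (fibw m.+4) + fibl m.+3 by rewrite fibl_rec.
have O : odd m.+3.+2 = odd m.+3 by rewrite /= negbK.
rewrite E L O at1_catr; last lia.
have ->: (size (fibw m.+4) + fibl m.+3).-1 = size (fibw m.+4) + (fibl m.+3).-1 by lia.
rewrite at1_catr; last lia. by split.
Qed.

Definition cond (a b i : nat) := exists k, a*i < k*b /\ k*b < a*i.+1.

Lemma sgn1 a b c d j k : b*c = a*d + 1 -> 0 < j -> j < b + d ->
  (forall t, j <> b*t) -> (forall t, j <> d*t) ->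
  (a*j < k*b <-> c*j < k*d) /\ (k*b < a*j <-> k*d < c*j).
Proof.
move=> H j0 jbd nb nd.
have e1 : k*b <> a*j.
  move=> E. have F: b*(j*c) = b*(k*d) + j by nia.
  apply: (nb (j*c - k*d)). rewrite mulnBr. lia.
have e2 : k*d <> c*j.
  move=> E. have F: d*(k*b) = d*(a*j) + j by nia.
  apply: (nd (k*b - a*j)). rewrite mulnBr. lia.
have X : b*(c*j) = d*(a*j) + j by nia.
have n3 : ~ (a*j < k*b /\ k*d < c*j).
  case=> h1 h2.
  have : b*(k*d+1) <= b*(c*j) by rewrite leq_mul2l; apply/orP; right; lia.
  have : d*(a*j+1) <= d*(k*b) by rewrite leq_mul2l; apply/orP; right; lia.
  nia.
have n4 : ~ (k*b < a*j /\ c*j < k*d).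
  case=> h1 h2.
  have : d*(k*b+1) <= d*(a*j) by rewrite leq_mul2l; apply/orP; right; lia.
  have : b*(c*j+1) <= b*(k*d) by rewrite leq_mul2l; apply/orP; right; lia.
  nia.
split; split => h.
- have: c*j < k*d \/ c*j = k*d \/ k*d < c*j by lia. case=> [//|[]]; [lia| move=> h'; exfalso; exact: n3].
- have: a*j < k*b \/ a*j = k*b \/ k*b < a*j by lia. case=> [//|[]]; [lia| move=> h'; exfalso; exact: n4].
- have: c*j < k*d \/ c*j = k*d \/ k*d < c*j by lia. case=> [h'|[]]; [exfalso; exact: n4|lia|done].
- have: a*j < k*b \/ a*j = k*b \/ k*b < a*j by lia. case=> [h'|[]]; [exfalso; exact: n3|lia|done].
Qed.

Lemma sgn a b c d j k : (b*c = a*d + 1 \/ a*d = b*c + 1) -> 0 < j -> j < b + d ->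
  (forall t, j <> b*t) -> (forall t, j <> d*t) ->
  (a*j < k*b <-> c*j < k*d) /\ (k*b < a*j <-> k*d < c*j).
Proof.
case=> H j0 jbd nb nd; first exact: sgn1.
have H' : d*a = c*b + 1 by lia.
have [A B] := sgn1 c d a b j k H' j0 ltac:(lia) nd nb. split; split; by [case: A|case: B].
Qed.

Lemma transfer a b c d i : (b*c = a*d + 1 \/ a*d = b*c + 1) -> 0 < i -> i.+1 < b + d ->
  (forall t, i <> b*t) -> (forall t, i <> d*t) ->
  (forall t, i.+1 <> b*t) -> (forall t, i.+1 <> d*t) ->
  (cond a b i <-> cond c d i).
Proof.
move=> H i0 ibd n1 n2 n3 n4.
split; case=> k [h1 h2]; exists k.
- have [A _] := sgn _ _ _ _ _ k H i0 ltac:(lia) n1 n2.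
  have [_ B] := sgn _ _ _ _ _ k H (ltn0Sn i) ibd n3 n4.
  split; [exact/A | exact/B].
- have [A _] := sgn _ _ _ _ _ k H i0 ltac:(lia) n1 n2.
  have [_ B] := sgn _ _ _ _ _ k H (ltn0Sn i) ibd n3 n4.
  split; [exact/A | exact/B].
Qed.

Lemma notmul b j : 0 < j < b -> forall t, j <> b*t.
Proof. move=> h [|t]; nia. Qed.
Lemma notmul2 b j : b < j < b + b -> forall t, j <> b*t.
Proof. move=> h [|[|t]]; nia. Qed.

Lemma shift a b j : 0 < b -> cond a b (b + j) <-> cond a b j.
Proof.
move=> b0; split; case=> k [h1 h2].
- exists (k - a). have: a < k by nia. move=> ak. rewrite mulnBl. nia.
- exists (k + a). nia.
Qed.

Lemma noexact a b c d j k : (b*c = a*d + 1 \/ a*d = b*c + 1) -> 0 < j < b -> k*b <> a*j.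
Proof.
move=> H hj E. case: H => H.
- have F: b*(j*c) = b*(k*d) + j by nia.
  apply: (@notmul b j hj (j*c - k*d)). rewrite mulnBr. lia.
- have F: b*(k*d) = b*(j*c) + j by nia.
  apply: (@notmul b j hj (k*d - j*c)). rewrite mulnBr. lia.
Qed.

Lemma cond_mod q n p i : n = p + q -> 0 < q -> (forall k, k*n <> q*i.+1) ->
  (cond q n i <-> p <= (q*i) %% n).
Proof.
move=> En q0 nex.
have n0 : 0 < n by lia.
have D := divn_eq (q*i) n. have R := ltn_pmod (q*i) n0.
set u := (q*i) %/ n in D *. set r := (q*i) %% n in D R *.
split.
- case=> k [h1 h2]. have: u < k by nia. move=> uk.
  have : (u+1)*n <= k*n by rewrite leq_mul2r; apply/orP; right; lia.
  nia.
- move=> pr. exists u.+1. have: r + q <> n. move=> E. apply: (nex u.+1). nia.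
  nia.
Qed.

Lemma lastcond q p n N: n = p+q -> N = n+p -> 2 <= p -> 1 <= q ->
  (p*p = q*n + 1 -> cond p N n.-1 /\ ~ cond p N n) /\
  (p*p + 1 = q*n -> ~cond p N n.-1 /\ cond p N n).
Proof.
move=> En EN p2 q1.
have A1 : q*N = q*n + q*p by rewrite EN mulnDr.
have A2 : p*n = p*p + q*p by rewrite En mulnDr (mulnC p q).
have A3 : p*n.-1 + p = p*n by rewrite -mulnSr; congr (_ * _); lia.
have A4 : p*n.+1 = p*n + p by rewrite mulnS addnC.
have A5 : q.+1*N = q*N + N by rewrite mulSn addnC.
have A6 : 0 < q -> q.-1*N + N = q*N by move=> h; rewrite addnC -mulSn; congr (_ * _); lia.
split=> E; split.
- exists q. lia.
- case=> k [h1 h2]. have: k <= q \/ q < k by lia. case=> hk.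
  + have: k*N <= q*N by rewrite leq_mul2r hk orbT. lia.
  + have: q.+1*N <= k*N by rewrite leq_mul2r hk orbT. lia.
- case=> k [h1 h2]. have: k <= q.-1 \/ q <= k by lia. case=> hk.
  + have: k*N <= q.-1*N by rewrite leq_mul2r hk orbT. have := A6 q1. lia.
  + have: q*N <= k*N by rewrite leq_mul2r hk orbT. lia.
- exists q. lia.
Qed.

Lemma G m : 3 <= m -> forall i, 0 < i -> i.+1 < fibl m ->
  (at1 (fibw m) i = Lb <-> cond (fibl (m-2)) (fibl m) i).
Proof.
elim/ltn_ind: m => m IH hm.
case: m IH hm => [|[|[|[|[|r]]]]] IH hm //.
- move=> i i0 hi. have: fibl 3 = 2 by []. lia.
- move=> i i0 hi. have F4: fibl 4 = 3 by [].
  have -> : i = 1 by lia.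
  split=> //. case=> k [h1 h2]. have F2 : fibl (4-2) = 1 by []. rewrite F4 F2 in h1 h2. lia.
move=> i i0 hi.
set N := fibl r.+4.+1. set n := fibl r.+4. set p := fibl r.+3. set q := fibl r.+2. set s := fibl r.+1.
have EN : N = n + p by rewrite /N fibl_rec.
have En : n = p + q by rewrite /n fibl_rec.
have Ep : p = q + s by rewrite /p fibl_rec.
have s1 : 1 <= s by apply: fibl_pos.
have q1 : 1 <= q by apply: fibl_pos.
have p2 : 2 <= p by lia.
have C2 := cassini r.+2. have C1 := cassini r.+1.
rewrite -/p -/q -/n in C2. rewrite -/s -/p -/q in C1.
have H1 : n*p = q*N + 1 \/ q*N = n*p + 1.
  have A1 : q*N = q*n + q*p by rewrite EN mulnDr.
  have A2 : n*p = p*p + q*p by rewrite En mulnDl (mulnC q p).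
  move: C2; case: (odd r.+2) => C2; lia.
have H2 : p*q = s*n + 1 \/ s*n = p*q + 1.
  have A1 : s*n = s*p + s*q by rewrite En mulnDr.
  have A2 : p*q = q*q + s*q by rewrite Ep mulnDl.
  move: C1; case: (odd r.+1) => C1; lia.
have E : fibw r.+4.+1 = fibw r.+4 ++ fibw r.+3 := fibwS _.
have Sn : size (fibw r.+4) = n by [].
rewrite E.
have: i.+1 < n \/ i = n.-1 \/ i = n \/ n < i by lia.
case=> [hA|[hB|[hB|hC]]].
- rewrite at1_catl; last lia; last lia.
  have := IH r.+4 ltac:(lia) isT i i0 hA.
  rewrite -/n => ->.
  apply: transfer => //; try lia; apply: notmul; lia.
- have [_ L] := last2 (r.+4) isT. rewrite -/n in L.
  rewrite hB at1_catl; [|lia|lia]. rewrite L.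
  have [X Y] := @lastcond q p n N En EN p2 q1.
  have O : odd r.+4 = odd r.+2 by rewrite /= negbK.
  rewrite O. move: C2 X Y. case: (odd r.+2) => C2 X Y.
  + have [W _] := Y C2. split; first by []. by move=> h; case: (W h).
  + have [W _] := X C2. by split.
- have [L _] := last2 (r.+4) isT. rewrite -/n in L.
  rewrite hB at1_catl; [|lia|lia]. rewrite L.
  have [X Y] := @lastcond q p n N En EN p2 q1.
  have O : odd r.+4 = odd r.+2 by rewrite /= negbK.
  rewrite O. move: C2 X Y. case: (odd r.+2) => C2 X Y.
  + have [_ W] := Y C2. by split.
  + have [_ W] := X C2. split; first by []. by move=> h; case: (W h).
- set j := i - n.
  have ij : i = n + j by rewrite /j; lia.
  have j0 : 0 < j by lia.
  have jp : j.+1 < p by lia.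
  rewrite ij -Sn at1_catr //.
  have := IH r.+3 ltac:(lia) isT j j0 jp.
  rewrite -/p => ->.
  rewrite Sn (_ : r.+3 - 2 = r.+1); last lia.
  have T1 : cond s p j <-> cond q n j.
    apply: transfer => //; try lia; apply: notmul; lia.
  have T2 : cond q n (n + j) <-> cond p N (n + j).
    apply: transfer => //; try lia.
    1-4: first [apply: notmul2; lia | apply: notmul; lia].
  rewrite T1 -T2. symmetry. apply: shift. lia.
Qed.

Theorem mainTheorem16 (m i : nat) :
  4 <= m -> ~~ odd m -> 1 <= i <= fibl m ->
  at1 (fibw m) i =
    (if mod1 (1 + i * fibl (m - 2)) (fibl m) <= fibl (m - 1) then La else Lb).
Proof.
case: m => [|[|[|[|r]]]] //= _ ev hi.
have O2 : odd r.+2 = false by move: ev => /=; case: (odd r).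
have O4 : odd r.+4 = false by move: ev => /=; case: (odd r).
have ->: r.+4 - 2 = r.+2 by lia. have ->: r.+4 - 1 = r.+3 by lia.
set N := fibl r.+4.+1. set n := fibl r.+4. set p := fibl r.+3. set q := fibl r.+2.
have EN : N = n + p by rewrite /N fibl_rec.
have En : n = p + q by rewrite /n fibl_rec.
have q1 : 1 <= q by apply: fibl_pos.
have p1 : 1 <= p by apply: fibl_pos.
have C2 := cassini r.+2. rewrite O2 -/p -/q -/n in C2.
have H1 : n*p = q*N + 1 \/ q*N = n*p + 1.
  have A1 : q*N = q*n + q*p by rewrite EN mulnDr.
  have A2 : n*p = p*p + q*p by rewrite En mulnDl (mulnC q p).
  lia.
have M : mod1 (1 + i * q) n = ((q*i) %% n).+1.
  rewrite /mod1; congr (_.+1).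
  have ->: 1 + i * q + n - 1 = q*i + n by rewrite (mulnC i q); lia.
  by rewrite modnDr.
rewrite M.
have [L1 L2] := last2 (r.+4) isT. rewrite O4 -/n in L1 L2.
have: i.+1 < n \/ i = n.-1 \/ i = n by lia.
case=> [hA|[hB|hB]].
- have G0 := @G r.+4 isT i ltac:(lia) hA.
  rewrite (_ : r.+4 - 2 = r.+2) in G0; last lia. rewrite -/n -/q in G0.
  have CM := @cond_mod q n p i En q1.
  have NE : forall k, k*n <> q*i.+1.
    move=> k. apply: (@noexact q n p N i.+1 k H1). lia.
  have CM' := CM NE.
  case: (at1 (fibw r.+4) i) G0 => G0.
  + have: ~ p <= (q*i) %% n. move=> h. have := (proj2 G0 (proj2 CM' h)). by [].
    move=> h; rewrite ifT //. lia.
  + have := proj1 CM' (proj1 G0 erefl). move=> h; rewrite ifF //. lia.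
- rewrite hB L2.
  have ->: q * n.-1 = q*n - q by rewrite -subn1 mulnBr muln1.
  have ->: q*n - q = (q.-1)*n + p.
    have ->: q.-1 * n = q*n - n by rewrite -subn1 mulnBl mul1n.
    have : n <= q*n by rewrite leq_pmull.
    lia.
  rewrite modnMDl modn_small; last lia. rewrite ifF //. lia.
- rewrite hB L1 modnMl ifT //.
Qed.
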